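(* Let $F$ be a field and $f=X^n+a_1X^{n-1}+\cdots+a_n\in F[X]$ a separable irreducible polynomial such that $F(\alpha)=S_F(f)$ for any root $\alpha$ of $f$, where $S_F(f)$ is the splitting field of $f$ over $F$. Let $G=\mathrm{Aut}(S_F(f)/F)=\{g_1,\dots,g_n\}$, and let $H_1,\dots,H_k$ be as defined in the context for this group $G$. If $H_i(a_1,\dots,a_n)\ne 0$ for all $1\le i\le k$, then $f$ is normal over $F$, i.e. $\{g(\alpha):g\in G\}$ is a basis of $S_F(f)$ over $F$.
   Context: For a finite group $G=\{g_1,\dots,g_n\}$ assign an indeterminate $X_g$ to each $g\in G$. Let $\rho_1,\dots,\rho_k$ be the irreducible complex representations of $G$, of degrees $m_1,\dots,m_k$, and put $F_i=\det\bigl(\sum_{g\in G}X_g\rho_i(g)\bigr)\in\mathbb C[X_{g_1},\dots,X_{g_n}]$; the coefficients of $F_i$ lie in the ring $\mathfrak o$ of algebraic integers. For each $i$ let $E_i\in\mathfrak o[X_{g_1},\dots,X_{g_n}]$ be a symmetrization of $F_i$, i.e. a polynomial multiple of $F_i$ in $\mathfrak o[X_{g_1},\dots,X_{g_n}]$ that is symmetric in $X_{g_1},\dots,X_{g_n}$, and let $H_i\in\mathfrak o[s_1,\dots,s_n]$ be its symmetric reduction: $E_i(X_{g_1},\dots,X_{g_n})=H_i(s_1,\dots,s_n)$, where $s_j$ is the $j$-th elementary symmetric polynomial in $X_{g_1},\dots,X_{g_n}$. The value $H_i(a_1,\dots,a_n)$ is computed after mapping the coefficients of $H_i$ into an algebraic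 closure of $F$ via a ring homomorphism $\mathfrak o\to\overline F$. *)

(* Defs.v *)
From HB Require Import structures.
From mathcomp Require Import all_boot all_order all_algebra all_fingroup.
From mathcomp Require Import all_field all_character.
From mathcomp Require Import mpoly.
Set Implicit Arguments. Unset Strict Implicit. Unset Printing Implicit Defensive.
Import GRing.Theory.
Local Open Scope ring_scope.

(* Group determinant factor F_i = det (sum_g X_g rho_i(g)), for the i-th
   irreducible complex representation 'Chi_i of the finite group G.  The
   indeterminate X_g is 'X_j with g = enum_val j (an enumeration
   g_1, ..., g_n of G, n = #|G|).  Representations are over algC (the
   algebraic closure of Q in C), over which every complex irreducible
   representation of a finite group is realisable. *)
Definition group_det_factor (gT : finGroupType) (G : {group gT}) (i : Iirr G)
  : {mpoly algC[#|G|]} :=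
  \det (\matrix_(r, c) \sum_(j < #|G|)
          'X_j * ((('Chi_i) (enum_val j) r c)%:MP_[#|G|])).

Definition is_symmetrization (n : nat) (P E : {mpoly algC[n]}) : Prop :=
  [/\ E \is a mpolyOver n Aint, E \is symmetric &
      exists2 Q : {mpoly algC[n]}, Q \is a mpolyOver n Aint & E = P * Q].

Definition elem_sym_tuple (n : nat) : n.-tuple {mpoly algC[n]} :=
  [tuple mesym n algC (val j).+1 | j < n].

Definition is_symmetric_reduction (n : nat) (E H : {mpoly algC[n]}) : Prop :=
  H \is a mpolyOver n Aint /\ E = comp_mpoly (elem_sym_tuple n) H.

Definition ring_hom_on_Aint (K : nzRingType) (phi : algC -> K) : Prop :=
  [/\ phi 1 = 1,
      {in Aint &, forall x y, phi (x + y) = phi x + phi y} &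
      {in Aint &, forall x y, phi (x * y) = phi x * phi y}].

Definition is_alg_closure (F : fieldType) (K : closedFieldType)
  (iota : {rmorphism F -> K}) : Prop :=
  forall x : K, exists2 p : {poly F}, p != 0 & root (map_poly iota p) x.

Definition eval_mapped (n : nat) (K : nzRingType) (phi : algC -> K)
  (H : {mpoly algC[n]}) (a : 'I_n -> K) : K := mmap phi a H.

(* Main.v *)
Require Import Defs.
From HB Require Import structures.
From mathcomp Require Import all_boot all_order all_algebra all_fingroup.
From mathcomp Require Import all_field all_character.
From mathcomp Require Import mpoly.
Set Implicit Arguments. Unset Strict Implicit. Unset Printing Implicit Defensive.
Import GRing.Theory.
Local Open Scope ring_scope.

Lemma mmap_meval n (R S : comNzRingType) (f : {rmorphism R -> S}) (h : 'I_n -> S)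
   (p : {mpoly R[n]}) : mmap f h p = (map_mpoly f p).@[h].
Proof.
elim/mpolyind: p => [|c m p _ _ IH]; first by rewrite mmap0 raddf0 meval0.
rewrite mmapD raddfD /= mevalD IH; congr (_ + _).
by rewrite mmapZ mmapX map_mpolyZ map_mpolyX mevalZ mevalX.
Qed.

Lemma map_mpoly_compR n k (R S : comNzRingType) (f : {rmorphism R -> S})
  (lq : n.-tuple {mpoly R[k]}) (p : {mpoly R[n]}) :
  map_mpoly f (p \mPo lq) =
  (map_mpoly f p) \mPo [tuple map_mpoly f (tnth lq i) | i < n].
Proof.
elim/mpolyind: p => [|c m p _ _ IH]; first by rewrite !raddf0.
rewrite !raddfD /= IH; congr (_ + _).
rewrite map_mpolyZ map_mpolyX linearZ /= map_mpolyZ !comp_mpolyX.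
rewrite linearZ /= comp_mpolyX rmorph_prod; congr (_ *: _); apply: eq_bigr => i _.
by rewrite rmorphXn tnth_mktuple.
Qed.

Lemma map_mesym n (R S : comNzRingType) (f : {rmorphism R -> S}) k :
  map_mpoly f (mesym n R k) = mesym n S k.
Proof.
rewrite !mesymE raddf_sum; apply: eq_bigr => h _. exact: map_mpolyX.
Qed.

Lemma meval_mesymN n (R : comNzRingType) k (v : 'I_n -> R) :
  (mesym n R k).@[fun i => - v i] = (-1) ^+ k * (mesym n R k).@[v].
Proof.
rewrite !mesymE !raddf_sum mulr_sumr /=; apply: eq_bigr => h /eqP hk.
rewrite !mevalX.
under eq_bigr do rewrite exprNn.
rewrite big_split /= prodrXr; congr (_ ^+ _ * _).
rewrite -hk -sum1_card [RHS]big_mkcond /=; apply: eq_bigr => i _.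
by rewrite mnmE; case: (i \in h).
Qed.

Lemma hornerB (R : nzRingType) (p q : {poly R}) (x : R) : (p - q).[x] = p.[x] - q.[x].
Proof. by rewrite hornerD hornerN. Qed.

Record AT := ATof { aval : algC; _ : aval \in Aint }.
HB.instance Definition _ := [isSub for aval].
HB.instance Definition _ := [Choice of AT by <:].
HB.instance Definition _ := [SubChoice_isSubComNzRing of AT by <:].
HB.instance Definition _ := GRing.RMorphism.copy aval val.

Definition liftP n (P : {mpoly algC[n]}) : {mpoly AT[n]} :=
  \sum_(m <- msupp P) (insubd (0 : AT) P@_m) *: 'X_[m].

Lemma liftPK n (P : {mpoly algC[n]}) : P \is a mpolyOver n Aint ->
  map_mpoly aval (liftP P) = P.
Proof.
move=> /mpolyOverP PA; rewrite /liftP raddf_sum /= [RHS]mpolyE; apply: eq_bigr => m _.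
rewrite map_mpolyZ map_mpolyX; congr (_ *: _); have := val_insubd (0:AT) P@_m; by rewrite PA.
Qed.

Lemma map_val_inj n : injective (map_mpoly aval : {mpoly AT[n]} -> _).
Proof.
move=> p q e; apply/mpolyP => m; apply: val_inj.
by rewrite -!mcoeff_map_mpoly e.
Qed.

Lemma map_val_Aint n (p : {mpoly AT[n]}) : map_mpoly aval p \is a mpolyOver n Aint.
Proof. by apply/mpolyOverP => m; rewrite mcoeff_map_mpoly; case: (p@_m). Qed.


Section Theta.
Variables (gT : finGroupType) (G : {group gT}).
Local Notation n := #|G|.

Definition Mx d (rG : mx_representation algC G d) : 'M[{mpoly algC[n]}]_d :=
  \matrix_(r, c) \sum_(j < n) 'X_j * ((rG (enum_val j) r c)%:MP_[n]).

Definition Theta d (rG : mx_representation algC G d) := \det (Mx rG).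

Lemma MxE d (rG : mx_representation algC G d) :
  Mx rG = \sum_(j < n) 'X_j *: map_mx (@mpolyC n algC) (rG (enum_val j)).
Proof.
apply/matrixP => a b; rewrite !mxE summxE; apply: eq_bigr => j _.
by rewrite !mxE.
Qed.

Lemma Theta_rsim d1 d2 (rG1 : mx_representation algC G d1)
   (rG2 : mx_representation algC G d2) :
  mx_rsim rG1 rG2 -> Theta rG1 = Theta rG2.
Proof.
case=> B e; subst d2 => rfB hB.
have uB : B \in unitmx by rewrite -row_free_unit.
pose B' := map_mx (@mpolyC n algC) B.
have hM : Mx rG1 *m B' = B' *m Mx rG2.
  rewrite !MxE mulmx_suml mulmx_sumr; apply: eq_bigr => j _.
  by rewrite -scalemxAl -scalemxAr -!map_mxM hB // enum_valP.
have := congr1 determinant hM; rewrite !det_mulmx /Theta mulrC.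
have nz : \det B' != 0.
  by rewrite det_map_mx /= mpolyC_eq0 -unitfE -unitmxE.
by move=> /(mulfI nz).
Qed.

Lemma Theta_dadd (r1 r2 : representation algC G) :
  Theta (dadd_grepr r1 r2) = Theta r1 * Theta r2.
Proof.
rewrite /Theta -(det_ublock _ 0); congr (\det _).
apply/matrixP => a b; rewrite /Mx.
case: (split_ordP a) => a0 ->; case: (split_ordP b) => b0 ->;
 rewrite ?block_mxEul ?block_mxEur ?block_mxEdl ?block_mxEdr !mxE;
 try (apply: eq_bigr => j _; rewrite /= ?block_mxEul ?block_mxEur ?block_mxEdl ?block_mxEdr ?mxE //).
all: by rewrite big1 // => j _; rewrite /= ?block_mxEur ?block_mxEdl mxE mulr0.
Qed.

Lemma Theta0 : Theta (@grepr0 algC _ G) = 1.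
Proof. by rewrite /Theta det_mx00. Qed.

Definition ThetaR (r : representation algC G) := Theta r.

Lemma ThetaR_big I (s : seq I) (P : pred I) (F : I -> representation algC G) :
  ThetaR (\big[dadd_grepr/grepr0]_(i <- s | P i) F i) = \prod_(i <- s | P i) ThetaR (F i).
Proof. exact: (big_morph ThetaR Theta_dadd Theta0). Qed.

Lemma ThetaR_muln r k : ThetaR (muln_grepr r k) = ThetaR r ^+ k.
Proof. by rewrite /muln_grepr ThetaR_big prodr_const card_ord. Qed.

Definition degI (i : Iirr G) := rdegree (Representation 'Chi_i).

Lemma Theta_reg :
  Theta (regular_repr algC G) = \prod_(i : Iirr G) Theta 'Chi_i ^+ degI i.
Proof.
pose r := \big[dadd_grepr/grepr0]_(i : Iirr G) muln_grepr (Representation 'Chi_i) (degI i).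
have -> : Theta (regular_repr algC G) = ThetaR r.
  apply: Theta_rsim; apply/cfRepr_rsimP.
  rewrite cfReprReg cfReg_sum /r cfRepr_dsum; apply/eqP; apply: eq_bigr => i _.
  by rewrite cfRepr_muln irrRepr -scaler_nat irr1_degree.
by rewrite /r ThetaR_big; apply: eq_bigr => i _; rewrite ThetaR_muln.
Qed.

End Theta.

Section RegT.
Variables (gT : finGroupType) (G : {group gT}).
Local Notation n := #|G|.

Definition MT : 'M[{mpoly AT[n]}]_n := \matrix_(a, b) \sum_(j < n)
   'X_j * (((b == gring_index G (enum_val a * enum_val j))%:R : AT)%:MP_[n]).

Lemma MT_val : map_mx (map_mpoly aval) MT = Mx (regular_repr algC G).
Proof.
apply/matrixP=> a b; rewrite !mxE rmorph_sum; apply: eq_bigr => j _.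
rewrite rmorphM /= map_mpolyX map_mpolyC; congr (_ * _%:MP_[_]); rewrite !mxE eq_sym.
by case: (_ == _); [exact: rmorph1 | exact: rmorph0].
Qed.

Lemma Theta_reg_val : map_mpoly aval (\det MT) = Theta (regular_repr algC G).
Proof. by rewrite -det_map_mx MT_val. Qed.

End RegT.
Section Main.
Variables (K : closedFieldType) (phi : algC -> K).
Hypothesis phi_hom : ring_hom_on_Aint phi.

Definition phiT (x : AT) : K := phi (val x).

Lemma phiT_additive : GRing.zmod_morphism phiT.
Proof.
case: phi_hom => _ phiD _ x y; rewrite /phiT rmorphB /=.
have := phiD (val x - val y) (val y); rewrite subrK => -> //; last by case: y.
  by rewrite addrK.
by rewrite rpredB //; [case: x | case: y].
Qed.

Lemma phiT_mult : GRing.multiplicative phiT.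
Proof.
case: phi_hom => phi1 _ phiM; split; last by rewrite /phiT rmorph1.
move=> x y; rewrite /phiT rmorphM /= phiM //; [case: x | case: y] => //.
Qed.

HB.instance Definition _ := GRing.isAdditive.Build AT K phiT phiT_additive.
HB.instance Definition _ := GRing.isMultiplicative.Build AT K phiT phiT_mult.

Lemma mmap_phiT n (h : 'I_n -> K) (P : {mpoly AT[n]}) :
  mmap phi h (map_mpoly aval P) = (map_mpoly phiT P).@[h].
Proof.
rewrite -mmap_meval /mmap (perm_big _ (msupp_map_mpoly _ val_inj)) /=.
by apply: eq_bigr => m _; rewrite mcoeff_map_mpoly.
Qed.


Lemma phi0 : phi 0 = 0.
Proof.
case: phi_hom => _ phiD _; have := phiD 0 0; rewrite addr0 rpred0 => /(_ isT isT).
by move=> h; apply: (addrI (phi 0)); rewrite addr0 -h.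
Qed.

Lemma ev_sum m (P : 'I_m -> {mpoly AT[m]}) (v : 'I_m -> K) :
  (map_mpoly phiT (\sum_j P j)).@[v] = \sum_j (map_mpoly phiT (P j)).@[v].
Proof.
elim/big_ind2: _ => //; first by rewrite rmorph0 meval0.
by move=> x1 x2 y1 y2 <- <-; rewrite rmorphD mevalD.
Qed.

Lemma ev_MT (gT : finGroupType) (G : {group gT}) (v : 'I_#|G| -> K) :
  (map_mpoly phiT (\det (MT G))).@[v] =
  \det (\matrix_(a < #|G|, b < #|G|) v (gring_index G ((enum_val a)^-1 * enum_val b))).
Proof.
rewrite -det_map_mx -det_map_mx; congr (\det _); apply/matrixP => a b.
rewrite !mxE; apply: etrans; first exact: ev_sum.
rewrite /=.
set j0 := gring_index G _.
have Gv := @enum_valP _ (mem G).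
have key j : (b == gring_index G (enum_val a * enum_val j)) = (j == j0).
  rewrite -(inj_eq (can_inj (@gring_valK _ G))) gring_indexK ?groupM ?Gv //.
  rewrite -(inj_eq (can_inj (@gring_valK _ G))) /j0 gring_indexK ?groupM ?groupV ?Gv //.
  by rewrite -(inj_eq (mulgI (enum_val a)) (enum_val j)) mulKVg eq_sym.
rewrite (bigD1 j0) //= big1 ?addr0 => [|j nj].
  rewrite rmorphM /= map_mpolyX map_mpolyC mevalM mevalXU mevalC key eqxx /=.
  by rewrite /phiT /=; case: phi_hom => -> _ _; rewrite mulr1.
rewrite rmorphM /= map_mpolyX map_mpolyC mevalM mevalXU mevalC key (negbTE nj) /=.
by rewrite /phiT /= phi0 mulr0.
Qed.

Variables (F : fieldType) (L : splittingFieldType F) (f : {poly F}).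
Hypotheses (f_monic : f \is monic) (f_sep : separable_poly f) (f_irr : irreducible_poly f).
Hypothesis L_split : splittingFieldFor 1%VS (map_poly (in_alg L) f) {:L}%VS.
Hypothesis f_gen : forall alpha : L, root (map_poly (in_alg L) f) alpha ->
             <<1%VS; alpha>>%VS = {:L}%VS.
Variable iota : {rmorphism F -> K}.
Variable alpha : L.
Hypothesis alpha_root : root (map_poly (in_alg L) f) alpha.

Local Notation fL := (map_poly (in_alg L) f).
Local Notation GG := ('Gal({:L}%VS / 1%AS)%G).
Local Notation n := #|'Gal({:L}%VS / 1%AS)%g|.

Lemma minPoly_fL : minPoly 1 alpha = fL.
Proof.
have dv : minPoly 1 alpha %| fL.
  by apply: minPoly_dvdp; [exact: alg_polyOver | exact: alpha_root].
have [p Dp] := polyOver1P (minPolyOver 1 alpha).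
have szp : size p != 1.
  have := root_size_gt1 (monic_neq0 (monic_minPoly 1 alpha)) (root_minPoly 1 alpha).
  by rewrite Dp size_map_poly; case: (size p) => [|[|]].
rewrite Dp dvdp_map in dv.
have pm : p \is monic by rewrite -(map_monic (in_alg L)) -Dp monic_minPoly.
have := f_irr.2 p szp dv; rewrite eqp_monic // => /eqP e.
by rewrite Dp e.
Qed.

Lemma galois_L : galois 1 {:L}.
Proof.
apply/splitting_galoisField; exists fL; split => //.
  exact: alg_polyOver.
by rewrite separable_map.
Qed.

Lemma dimL : \dim {:L} = n.
Proof. by have := galois_dim galois_L; rewrite dimv1 divn1. Qed.

Lemma size_f : size f = n.+1.
Proof.
by rewrite -(size_map_poly (in_alg L)) -minPoly_fL size_minPoly adjoin_degreeE
   (f_gen alpha_root) dimv1 divn1 dimL.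
Qed.

Lemma gal_alg (g : gal_of {:L}) (p : {poly F}) : g \in GG ->
  g ((map_poly (in_alg L) p).[alpha]) = (map_poly (in_alg L) p).[g alpha].
Proof.
move=> Gg; rewrite -horner_map; congr (_.[_]).
exact: (fixedPoly_gal (sub1v _) Gg (alg_polyOver _ _)).
Qed.

Lemma gal_inj (g h : gal_of {:L}) : g \in GG -> h \in GG -> g alpha = h alpha -> g = h.
Proof.
move=> Gg Gh e; apply/eqP/gal_eqP => x _.
have /Fadjoin1_polyP[p ->] : x \in <<1; alpha>>%VS by rewrite (f_gen alpha_root) memvf.
by rewrite !gal_alg // e.
Qed.

Lemma gal_root g : g \in GG -> root fL (g alpha).
Proof.
by move=> Gg; rewrite /root -gal_alg // (rootP alpha_root) rmorph0.
Qed.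

Lemma ex_pb (x : L) : exists p : {poly F}, x == (map_poly (in_alg L) p).[alpha].
Proof.
have /Fadjoin1_polyP[p ->] : x \in <<1; alpha>>%VS by rewrite (f_gen alpha_root) memvf.
by exists p.
Qed.

Definition pb x := xchoose (ex_pb x).
Lemma pbE x : x = (map_poly (in_alg L) (pb x)).[alpha].
Proof. exact/eqP/(xchooseP (ex_pb x)). Qed.

Lemma ex_beta : exists beta : K, root (map_poly iota f) beta.
Proof. by apply/closed_rootP; rewrite size_map_poly size_f eqSS -lt0n cardG_gt0. Qed.
Definition beta := xchoose ex_beta.
Lemma beta_root : root (map_poly iota f) beta.
Proof. exact: xchooseP ex_beta. Qed.

Lemma kerL q : (map_poly (in_alg L) q).[alpha] = 0 -> (map_poly iota q).[beta] = 0.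
Proof.
move=> h.
have : minPoly 1 alpha %| map_poly (in_alg L) q.
  by apply: minPoly_dvdp; [exact: alg_polyOver | exact/rootP].
rewrite minPoly_fL dvdp_map => /dvdpP[r ->].
by rewrite rmorphM hornerM (rootP beta_root) mulr0.
Qed.

Definition sigma (x : L) : K := (map_poly iota (pb x)).[beta].

Lemma sigmaE q : sigma ((map_poly (in_alg L) q).[alpha]) = (map_poly iota q).[beta].
Proof.
apply/eqP; rewrite -subr_eq0 -hornerB -rmorphB; apply/eqP/kerL.
by rewrite rmorphB hornerB -pbE subrr.
Qed.

Lemma sigma_additive : GRing.zmod_morphism sigma.
Proof.
move=> x y; rewrite [x]pbE [y]pbE -hornerB -rmorphB !sigmaE.
by rewrite rmorphB hornerB.
Qed.

Lemma sigma_mult : GRing.multiplicative sigma.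
Proof.
split.
  move=> x y; rewrite [x]pbE [y]pbE -hornerM -rmorphM !sigmaE.
  by rewrite rmorphM hornerM.
have -> : (1 : L) = (map_poly (in_alg L) 1).[alpha] by rewrite rmorph1 hornerC.
by rewrite sigmaE rmorph1 hornerC.
Qed.

HB.instance Definition _ := GRing.isAdditive.Build L K sigma sigma_additive.
HB.instance Definition _ := GRing.isMultiplicative.Build L K sigma sigma_mult.

Lemma sigma_alg c : sigma (in_alg L c) = iota c.
Proof.
have -> : in_alg L c = (map_poly (in_alg L) c%:P).[alpha] by rewrite map_polyC hornerC.
by rewrite sigmaE map_polyC hornerC.
Qed.

Lemma sigma_fL : map_poly sigma fL = map_poly iota f.
Proof.
by rewrite -map_poly_comp; apply: eq_map_poly => c /=; exact: sigma_alg.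
Qed.

Definition rr (j : 'I_n) : K := sigma ((enum_val j : gal_of {:L}) alpha).
Definition cs : n.-tuple K := [tuple rr j | j < n].

Lemma GGv (j : 'I_n) : (enum_val j : gal_of {:L}) \in GG.
Proof. exact: enum_valP. Qed.

Lemma rr_inj : injective rr.
Proof.
move=> i j /fmorph_inj /(gal_inj (GGv i) (GGv j)) e.
exact: enum_val_inj e.
Qed.

Lemma iota_f_prod : map_poly iota f = \prod_(c <- cs) ('X - c%:P).
Proof.
have rootsr : all (root (map_poly iota f)) cs.
  apply/allP => c /mapP[j _ ->].
  by rewrite -sigma_fL /root horner_map (rootP (gal_root (GGv j))) rmorph0.
have uniqr : uniq_roots cs.
  by rewrite uniq_rootsE map_inj_uniq ?enum_uniq //; exact: rr_inj.
have [q Dq0] := uniq_roots_prod_XsubC rootsr uniqr.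
have Dq : map_poly iota f = q * \prod_(c <- cs) ('X - c%:P) by exact: Dq0.
clear Dq0.
move: Dq; set P := \prod_(c <- cs) _ => Dq.
have mP : P \is monic := monic_prod_XsubC _ _ _.
have szP : size P = n.+1 by rewrite size_prod_XsubC size_tuple.
have q0 : q != 0.
  apply/eqP => q0; move: Dq; rewrite q0 mul0r => /eqP.
  by rewrite -size_poly_eq0 size_map_poly size_f.
have szq : size q = 1%N.
  have e : size (map_poly iota f) = size (q * P) by rewrite -Dq.
  move: e; rewrite size_Mmonic // szP size_map_poly size_f.
  by rewrite addnS /= => /eqP; rewrite -{1}[n.+1]add1n eqn_add2r => /eqP.
have lq : lead_coef q = 1.
  have := congr1 lead_coef Dq; rewrite lead_coefM (monicP mP) mulr1.
  by move=> <-; apply/monicP; rewrite monic_map.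
have q1 : q = 1.
  rewrite [q]size1_polyC ?szq //.
  have -> : q`_0 = 1 by rewrite -lq lead_coefE szq.
  by [].
by rewrite Dq q1 mul1r.
Qed.

Lemma a_coef (j : 'I_n) :
  iota f`_((size f).-1 - (val j).+1) = (mesym n K (val j).+1).@[fun i => - rr i].
Proof.
rewrite size_f /= -coef_map iota_f_prod.
have h : (\prod_(c <- cs) ('X - c%:P))`_(n - (val j).+1)
   = (-1) ^+ (val j).+1 * (mesym n K (val j).+1).@[tnth cs]
  := mroots_coeff cs (Ordinal (ltn_ord j : ((val j).+1 < n.+1)%N)).
rewrite h meval_mesymN; congr (_ * _); apply: meval_eq => i.
by rewrite tnth_mktuple.
Qed.

Definition vv (i : 'I_n) : K := - rr i.

Lemma nth_galseq (i : 'I_n) :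
  nth 0 [seq (g : gal_of {:L}%VS) alpha | g in 'Gal({:L}%VS / 1%AS)%g] i
  = (enum_val i : gal_of {:L}) alpha.
Proof.
rewrite /image_mem (nth_map (enum_val i)); last by rewrite -cardE.
by rewrite (set_nth_default (enum_default i)) // -cardE.
Qed.

Lemma free_core :
  \det (\matrix_(a < n, b < n) vv (gring_index GG ((enum_val a)^-1 * enum_val b))) != 0 ->
  forall k : 'I_n -> F, \sum_(i < n) k i *: (enum_val i : gal_of {:L}) alpha = 0 ->
  forall i, k i = 0.
Proof.
move=> Nnz k hk i; apply/eqP; apply: contraNT Nnz => ki.
apply/det0P.
pose tau (h : 'I_n) : 'I_n := gring_index GG ((enum_val h)^-1)%g.
have tauE h : enum_val (tau h) = (enum_val h)^-1%g by rewrite gring_indexK // groupV GGv.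
have tauK : involutive tau.
  by move=> h; apply: enum_val_inj; rewrite !tauE invgK.
exists (\row_h iota (k (tau h))).
  apply/eqP => /rowP /(_ (tau i)); rewrite !mxE tauK => /eqP.
  by rewrite fmorph_eq0; apply/negP.
apply/rowP => b; rewrite !mxE.
transitivity (- sigma ((enum_val b : gal_of {:L})
   (\sum_h k (tau h) *: (enum_val (tau h) : gal_of {:L}) alpha))).
  rewrite raddf_sum raddf_sum /= -sumrN. apply: eq_big => // h _. rewrite !mxE.
  rewrite /vv /rr gring_indexK ?groupM ?groupV ?GGv // galM ?memvf // tauE.
  by rewrite linearZ /= -mulr_algl rmorphM /= sigma_alg mulrN.
have -> : \sum_h k (tau h) *: (enum_val (tau h) : gal_of {:L}) alpha = 0.
  by rewrite -[RHS]hk [RHS](reindex_inj (inv_inj tauK)).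
by rewrite !raddf0.
Qed.

Lemma basis_from_det :
  \det (\matrix_(a < n, b < n) vv (gring_index GG ((enum_val a)^-1 * enum_val b))) != 0 ->
  basis_of {:L}%VS [seq (g : gal_of {:L}%VS) alpha | g in 'Gal({:L}%VS / 1%AS)%g].
Proof.
move=> Nnz; set X := [seq _ | g in _].
have sX : size X = n by rewrite size_image.
have fX : free X.
  apply/(@freeP _ _ _ (in_tuple X)).
  have gen : forall m (e : m = n) (k : 'I_m -> F),
      \sum_(i < m) k i *: X`_i = 0 -> forall i, k i = 0.
    move=> m e; subst m => k hk; apply: (free_core Nnz).
    by rewrite -[RHS]hk; apply: eq_bigr => i _; rewrite nth_galseq.
  exact: gen sX.
rewrite /basis_of fX andbT eqEdim subvf /=.
by move: fX; rewrite /free => /eqP ->; rewrite sX dimL.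
Qed.

Lemma main_basis (E H : Iirr GG -> {mpoly algC[n]})
  (E_sym : forall i, is_symmetrization (group_det_factor i) (E i))
  (H_red : forall i, is_symmetric_reduction (E i) (H i))
  (H_nz : forall i, eval_mapped phi (H i)
       (fun j : 'I_n => iota f`_((size f).-1 - (val j).+1)) != 0) :
  basis_of {:L}%VS [seq (g : gal_of {:L}%VS) alpha | g in 'Gal({:L}%VS / 1%AS)%g].
Proof.
apply: basis_from_det; rewrite -ev_MT.
have hQ i : exists Q, (Q \is a mpolyOver n Aint) && (E i == group_det_factor i * Q).
  by case: (E_sym i) => _ _ [Q QA EQ]; exists Q; rewrite QA EQ eqxx.
pose Qf i := xchoose (hQ i).
have QfA i : Qf i \is a mpolyOver n Aint by case/andP: (xchooseP (hQ i)).
have EQ i : E i = group_det_factor i * Qf i by case/andP: (xchooseP (hQ i)) => _ /eqP.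
pose s' : n.-tuple {mpoly AT[n]} := [tuple mesym n AT (val j).+1 | j < n].
pose El i := liftP (H i) \mPo s'.
have mapE i : map_mpoly aval (El i) = E i.
  rewrite map_mpoly_comp; last exact: val_inj.
  rewrite liftPK; last by case: (H_red i).
  case: (H_red i) => _ ->; congr (_ \mPo _); apply: eq_from_tnth => j.
  rewrite /elem_sym_tuple tnth_mktuple (tnth_nth 0) /= (nth_map 0); last first.
    by rewrite size_map size_enum_ord.
  by rewrite (nth_map j) ?size_enum_ord // nth_ord_enum; exact: map_mesym.
have key : \prod_i El i ^+ degI i = \det (MT GG) * \prod_i liftP (Qf i) ^+ degI i.
  apply: map_val_inj; rewrite rmorphM !rmorph_prod /= Theta_reg_val Theta_reg -big_split /=.
  apply: eq_bigr => i _; rewrite !rmorphXn /= mapE liftPK // EQ exprMn.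
  by [].
have evE i : (map_mpoly phiT (El i)).@[vv] =
    eval_mapped phi (H i) (fun j : 'I_n => iota f`_((size f).-1 - (val j).+1)).
  rewrite /eval_mapped -(liftPK (H_red i).1) mmap_phiT /El map_mpoly_compR comp_mpoly_meval.
  apply: meval_eq => j.
  by rewrite tnth_mktuple tnth_mktuple map_mesym a_coef.
have := congr1 (fun P => (map_mpoly phiT P).@[vv]) key.
rewrite /= rmorphM mevalM => e; apply/negP => /eqP z; move: e; rewrite z mul0r.
rewrite !rmorph_prod /=; apply/eqP; rewrite prodf_seq_neq0; apply/allP => i _.
by rewrite rmorphXn /= rmorphXn /= expf_neq0 // evE.
Qed.

End Main.

Theorem theorem5p1 (F : fieldType) (L : splittingFieldType F) (f : {poly F})
  (f_monic : f \is monic) (f_sep : separable_poly f)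
  (f_irr : irreducible_poly f)
  (L_split : splittingFieldFor 1%VS (map_poly (in_alg L) f) {:L}%VS)
  (f_gen : forall alpha : L, root (map_poly (in_alg L) f) alpha ->
             <<1%VS; alpha>>%VS = {:L}%VS)
  (K : closedFieldType) (iota : {rmorphism F -> K})
  (K_clos : is_alg_closure iota)
  (phi : algC -> K) (phi_hom : ring_hom_on_Aint phi)
  (E H : Iirr 'Gal({:L}%VS / 1%AS)%G -> {mpoly algC[#|'Gal({:L}%VS / 1%AS)%g|]})
  (E_sym : forall i, is_symmetrization (group_det_factor i) (E i))
  (H_red : forall i, is_symmetric_reduction (E i) (H i))
  (H_nz : forall i,
     eval_mapped phi (H i)
       (fun j : 'I_#|'Gal({:L}%VS / 1%AS)%g| =>
          iota f`_((size f).-1 - (val j).+1)) != 0) :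
  forall alpha : L, root (map_poly (in_alg L) f) alpha ->
    basis_of {:L}%VS [seq (g : gal_of {:L}%VS) alpha | g in 'Gal({:L}%VS / 1%AS)%g].
Proof.
move=> alpha ar.
exact: (main_basis phi_hom f_monic f_sep f_irr L_split f_gen ar E_sym H_red H_nz).
Qed.
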